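(* In the setting described in the context, there is a constant $C$ independent of $\epsilon\in(0,1)$ such that for every $t\ge0$, $$\int_{-\pi}^{\pi}\int_{-\pi}^{\pi}|X^\epsilon(x,y,t)|\,dx\,dy\le\int_{-\pi}^{\pi}\int_{-\pi}^{\pi}|\rho_0^\epsilon(x,y)|\,dx\,dy\le C.$$
   Context: Let $\mathcal{C}_b(\mathbb{R}^2)$ be the Banach space of bounded continuous real functions on $\mathbb{R}^2$ with sup norm; for real $u$, $u^+=\max(0,u)$, $u^-=\max(0,-u)$. For $0<\epsilon<1$ let $u^\epsilon,v^\epsilon:\mathbb{R}^2\times[0,\infty)\to\mathbb{R}$ be $2\pi$-periodic in $x$ and in $y$, with $t\mapsto u^\epsilon(\cdot,\cdot,t),v^\epsilon(\cdot,\cdot,t)$ continuous into $\mathcal{C}_b(\mathbb{R}^2)$ and bounded uniformly in $\epsilon,x,y,t$. Let $\rho_0^\epsilon\in\mathcal{C}_b(\mathbb{R}^2)$ be $2\pi$-periodic in each variable with $\sup_\epsilon\int_{[-\pi,\pi]^2}|\rho_0^\epsilon|<\infty$. Let $X^\epsilon$ be the global $\mathcal{C}^1$ solution $[0,\infty)\to\mathcal{C}_b(\mathbb{R}^2)$ of $X^\epsilon(x,y,0)=\rho_0^\epsilon(x,y)$ and $$\frac{d}{dt}X^\epsilon(x,y,t)=\frac1\epsilon\big[(X^\epsilon u^{\epsilon+})(x-\epsilon,y,t)-(X^\epsilon|u^\epsilon|)(x,y,t)+(X^\epsilon u^{\epsilon-})(x+\epsilon,y,t)+(X^\epsilon v^{\epsilon+})(x,y-\epsilon,t)-(X^\epsilon|v^\epsilon|)(x,y,t)+(X^\epsilon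 v^{\epsilon-})(x,y+\epsilon,t)\big].$$ *)

(* Defs.v *)
From Stdlib Require Import Reals.
From Coquelicot Require Import Coquelicot.
Open Scope R_scope.

Definition pos (a : R) : R := Rmax 0 a.
Definition neg (a : R) : R := Rmax 0 (- a).

Definition Cb (f : R -> R -> R) : Prop :=
  (exists M, forall x y, Rabs (f x y) <= M) /\
  (forall x y, continuous (fun p : R * R => f (fst p) (snd p)) (x, y)).

Definition periodic2 (f : R -> R -> R) : Prop :=
  forall x y, f (x + 2 * PI) y = f x y /\ f x (y + 2 * PI) = f x y.

Definition Cb_path (F : R -> R -> R -> R) : Prop :=
  forall t, 0 <= t -> Cb (F t).

Definition sup_continuous (F : R -> R -> R -> R) : Prop :=
  forall t, 0 <= t -> forall e, 0 < e -> exists d, 0 < d /\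
    forall s, 0 <= s -> Rabs (s - t) < d ->
      forall x y, Rabs (F s x y - F t x y) <= e.

Definition sup_derivative (F F' : R -> R -> R -> R) : Prop :=
  forall t, 0 <= t -> forall e, 0 < e -> exists d, 0 < d /\
    forall s, 0 <= s -> s <> t -> Rabs (s - t) < d ->
      forall x y, Rabs ((F s x y - F t x y) / (s - t) - F' t x y) <= e.

Definition rhs (eps : R) (X u v : R -> R -> R -> R) (x y t : R) : R :=
  / eps * ( X (x - eps) y t * pos (u (x - eps) y t)
          - X x y t * Rabs (u x y t)
          + X (x + eps) y t * neg (u (x + eps) y t)
          + X x (y - eps) t * pos (v x (y - eps) t)
          - X x y t * Rabs (v x y t)
          + X x (y + eps) t * neg (v x (y + eps) t) ).

Definition dint (f : R -> R -> R) : R :=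
  RInt (fun x => RInt (fun y => f x y) (- PI) PI) (- PI) PI.

(* Main.v *)
Require Import Defs.
From Stdlib Require Import Reals Lra Classical.
From Coquelicot Require Import Coquelicot.
Open Scope R_scope.

Definition rcont (p : R -> R) := forall t, 0 <= t -> forall e, 0 < e -> exists d, 0 < d /\
  forall s, 0 <= s -> Rabs (s - t) < d -> Rabs (p s - p t) < e.
Definition rdini (p : R -> R) := forall t, 0 <= t -> forall e, 0 < e -> exists d, 0 < d /\
  forall s, t < s < t + d -> p s <= p t + (s - t) * e.

Lemma dini_mono_e p a b e : rcont p -> rdini p -> 0 <= a -> a <= b -> 0 < e ->
  p b <= p a + e * (b - a).
Proof.
  intros Hc Hd Ha Hab He.
  set (S := fun t => a <= t <= b /\ p t <= p a + e * (t - a)).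
  assert (HS : bound S) by (exists b; intros t [[_ H] _]; exact H).
  assert (HSa : exists x, S x) by (exists a; split; [lra| rewrite Rminus_diag, Rmult_0_r; lra]).
  destruct (completeness S HS HSa) as [c [Hub Hlub]].
  assert (Hac : a <= c) by (apply Hub; split; [lra| rewrite Rminus_diag, Rmult_0_r; lra]).
  assert (Hcb : c <= b) by (apply Hlub; intros t [[_ H] _]; exact H).
  assert (Hc_in : p c <= p a + e * (c - a)).
  { destruct (Rle_dec (p c) (p a + e * (c - a))) as [H|H]; [exact H|exfalso].
    set (g := p c - (p a + e * (c - a))).
    assert (Hg : 0 < g) by (unfold g; lra).
    destruct (Hc c ltac:(lra) (g/2) ltac:(lra)) as [d [Hd0 Hd1]].
    destruct (Req_dec c a) as [E|E].
    { subst c. unfold g in Hg. rewrite Rminus_diag, Rmult_0_r in Hg. lra. }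
    set (d' := Rmin d (Rmin (c - a) (g / (2 * e)))).
    assert (Hd'0 : 0 < d').
    { unfold d'. repeat apply Rmin_glb_lt; try lra. apply Rdiv_lt_0_compat; lra. }
    assert (Hex : exists s, S s /\ c - d' < s).
    { apply NNPP; intro Hn.
      assert (c <= c - d'); [|lra].
      apply Hlub. intros t Ht. destruct (Rle_dec t (c - d')) as [|Hnt]; [assumption|].
      exfalso; apply Hn; exists t; split; [exact Ht|lra]. }
    destruct Hex as [s [[[Has Hsb] Hs] Hsc]].
    assert (Hsc' : s <= c) by (apply Hub; split; [lra| exact Hs]).
    assert (Hd'1 : d' <= d) by apply Rmin_l.
    assert (Hd'2 : d' <= g / (2*e)) by (unfold d'; eapply Rle_trans; [apply Rmin_r|apply Rmin_r]).
    assert (Habs : Rabs (s - c) < d) by (rewrite Rabs_left1; lra).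
    specialize (Hd1 s ltac:(lra) Habs).
    assert (He2 : e * (c - s) <= g / 2).
    { assert (c - s <= g / (2*e)) by lra.
      apply Rmult_le_compat_l with (r:=e) in H0; [|lra].
      replace (e * (g / (2*e))) with (g/2) in H0 by (field; lra). lra. }
    assert (e * (s - a) = e * (c - a) - e * (c - s)) by ring.
    assert (0 <= e * (c - s)) by (apply Rmult_le_pos; lra).
    apply Rabs_def2 in Hd1. unfold g in *. lra. }
  destruct (Req_dec c b) as [E|E]; [subst c; exact Hc_in|].
  exfalso.
  destruct (Hd c ltac:(lra) e He) as [d [Hd0 Hd1]].
  set (s := Rmin (c + d/2) b).
  assert (Hs1 : c < s) by (unfold s; apply Rmin_glb_lt; lra).
  assert (Hs2 : s <= b) by apply Rmin_r.
  assert (Hs3 : s <= c + d / 2) by apply Rmin_l.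
  assert (HSs : S s).
  { split; [lra|]. specialize (Hd1 s ltac:(lra)).
    replace (e * (s - a)) with (e * (c - a) + (s - c) * e) by ring. lra. }
  specialize (Hub s HSs). lra.
Qed.

Lemma dini_mono p a b : rcont p -> rdini p -> 0 <= a -> a <= b -> p b <= p a.
Proof.
  intros Hc Hd Ha Hab.
  destruct (Rle_dec (p b) (p a)) as [|H]; [assumption|exfalso].
  destruct (Req_dec a b) as [E|E]; [subst; lra|].
  set (e := (p b - p a) / (2 * (b - a))).
  assert (He : 0 < e) by (unfold e; apply Rdiv_lt_0_compat; lra).
  pose proof (dini_mono_e p a b e Hc Hd Ha Hab He).
  assert (e * (b - a) = (p b - p a) / 2) by (unfold e; field; lra). lra.
Qed.

Lemma cont_pt_ed f t : continuity_pt f t -> forall e, 0 < e -> exists d, 0 < d /\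
  forall s, Rabs (s - t) < d -> Rabs (f s - f t) < e.
Proof.
  intros Hc e He. destruct (Hc e He) as [d [Hd H]].
  exists d; split; [lra|]. intros s Hs.
  destruct (Req_dec s t) as [->|Hne]. { rewrite Rminus_diag, Rabs_R0; lra. }
  apply (H s). split. { split; [exact I| auto]. } exact Hs.
Qed.

Lemma gronwall p K : rcont p -> (forall t, 0 <= t -> 0 <= p t) -> p 0 = 0 -> 0 <= K ->
  (forall t, 0 <= t -> forall e, 0 < e -> exists d, 0 < d /\
     forall s, t < s < t + d -> p s <= p t * (1 + (s - t) * K) + (s - t) * e) ->
  forall t, 0 <= t -> p t = 0.
Proof.
  intros Hc Hpos H0 HK Hd.
  set (E := fun s => exp (-(2*K)*s)).
  assert (HEc : forall t, continuity_pt E t) by (intros; unfold E; reg).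
  assert (HE1 : forall s, 0 <= s -> E s <= 1).
  { intros s Hs. unfold E. rewrite <- exp_0. destruct (Req_dec (-(2*K)*s) 0) as [->|]; [lra|].
    left. apply exp_increasing. nra. }
  assert (HEp : forall s, 0 < E s) by (intros; apply exp_pos).
  set (q := fun s => p s * E s).
  assert (Hqc : rcont q).
  { intros t Ht e He.
    destruct (Hc t Ht (e/2) ltac:(lra)) as [d1 [Hd1 H1]].
    destruct (cont_pt_ed E t (HEc t) (e / (2 * (Rabs (p t) + 1))) ltac:(apply Rdiv_lt_0_compat; [lra| pose proof (Rabs_pos (p t)); lra])) as [d2 [Hd2 H2]].
    exists (Rmin d1 d2); split; [apply Rmin_glb_lt; lra|].
    intros s Hs Hst.
    assert (A1 : Rabs (s - t) < d1) by (eapply Rlt_le_trans; [exact Hst| apply Rmin_l]).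
    assert (A2 : Rabs (s - t) < d2) by (eapply Rlt_le_trans; [exact Hst| apply Rmin_r]).
    specialize (H1 s Hs A1). specialize (H2 s A2).
    unfold q.
    replace (p s * E s - p t * E t) with ((p s - p t) * E s + p t * (E s - E t)) by ring.
    eapply Rle_lt_trans; [apply Rabs_triang|]. rewrite !Rabs_mult.
    assert (B1 : Rabs (p s - p t) * Rabs (E s) <= e / 2).
    { rewrite (Rabs_right (E s)) by (left; apply HEp).
      specialize (HE1 s Hs). pose proof (Rabs_pos (p s - p t)). nra. }
    assert (B2 : Rabs (p t) * Rabs (E s - E t) < e / 2).
    { pose proof (Rabs_pos (p t)). pose proof (Rabs_pos (E s - E t)).
      apply Rle_lt_trans with ((Rabs (p t) + 1) * Rabs (E s - E t)); [nra|].
      apply Rmult_lt_compat_l with (r := Rabs (p t) + 1) in H2; [|lra].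
      replace ((Rabs (p t) + 1) * (e / (2 * (Rabs (p t) + 1)))) with (e/2) in H2 by (field; lra).
      exact H2. }
    lra. }
  assert (Hqd : rdini q).
  { intros t Ht e He. destruct (Hd t Ht e He) as [d [Hd0 Hd1]].
    exists d; split; [exact Hd0|]. intros s Hs. specialize (Hd1 s Hs).
    unfold q. set (h := s - t) in *.
    assert (Es : E s = E t * exp (-(2*K)*h)).
    { unfold E, h. rewrite <- exp_plus. f_equal. ring. }
    assert (Hx : exp (-(2*K)*h) * (1 + h * K) <= 1).
    { pose proof (exp_ineq1_le (2*K*h)).
      assert (exp (-(2*K)*h) * exp (2*K*h) = 1) by (rewrite <- exp_plus, <- exp_0; f_equal; ring).
      pose proof (exp_pos (-(2*K)*h)). assert (0 < h) by (unfold h; lra).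
      assert (0 <= h * K) by nra.
      rewrite <- H1. apply Rmult_le_compat_l; lra. }
    pose proof (HEp s). pose proof (HEp t). pose proof (HE1 s ltac:(lra)).
    pose proof (Hpos t Ht). assert (0 < h) by (unfold h; lra).
    apply Rle_trans with ((p t * (1 + h * K) + h * e) * E s).
    { apply Rmult_le_compat_r; lra. }
    rewrite Es. pose proof (exp_pos (-(2*K)*h)).
    assert (p t * E t * (exp (- (2 * K) * h) * (1 + h * K)) <= p t * E t).
    { rewrite <- (Rmult_1_r (p t * E t)) at 2. apply Rmult_le_compat_l; [nra|lra]. }
    assert (h * e * (E t * exp (- (2 * K) * h)) <= h * e).
    { rewrite <- Es. rewrite <- (Rmult_1_r (h*e)) at 2. apply Rmult_le_compat_l; nra. }
    nra. }
  intros t Ht.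
  pose proof (dini_mono q 0 t Hqc Hqd ltac:(lra) Ht).
  unfold q in H. rewrite H0, Rmult_0_l in H.
  pose proof (Hpos t Ht). pose proof (HEp t). nra.
Qed.

Definition R2 (eps : R) (Z U V : R -> R -> R) (x y : R) : R :=
  / eps * ( Z (x - eps) y * Defs.pos (U (x - eps) y)
          - Z x y * Rabs (U x y)
          + Z (x + eps) y * Defs.neg (U (x + eps) y)
          + Z x (y - eps) * Defs.pos (V x (y - eps))
          - Z x y * Rabs (V x y)
          + Z x (y + eps) * Defs.neg (V x (y + eps)) ).

Lemma rhs_R2 eps X u v x y t : rhs eps X u v x y t =
  R2 eps (fun x y => X x y t) (fun x y => u x y t) (fun x y => v x y t) x y.
Proof. reflexivity. Qed.

Lemma pos_ge0 a : 0 <= Defs.pos a. Proof. apply Rmax_l. Qed.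
Lemma neg_ge0 a : 0 <= Defs.neg a. Proof. apply Rmax_l. Qed.
Lemma pos_neg a : Defs.pos a + Defs.neg a = Rabs a.
Proof. unfold Defs.pos, Defs.neg, Rmax. destruct (Rle_dec 0 a), (Rle_dec 0 (-a));
  unfold Rabs; destruct (Rcase_abs a); lra. Qed.
Lemma pos_le a : Defs.pos a <= Rabs a. Proof. pose proof (pos_neg a); pose proof (neg_ge0 a); lra. Qed.
Lemma neg_le a : Defs.neg a <= Rabs a. Proof. pose proof (pos_neg a); pose proof (pos_ge0 a); lra. Qed.
Lemma pos_alt a : Defs.pos a = (a + Rabs a) / 2.
Proof. unfold Defs.pos, Rmax. destruct (Rle_dec 0 a); unfold Rabs; destruct (Rcase_abs a); lra. Qed.
Lemma neg_alt a : Defs.neg a = (Rabs a - a) / 2.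
Proof. unfold Defs.neg, Rmax. destruct (Rle_dec 0 (-a)); unfold Rabs; destruct (Rcase_abs a); lra. Qed.

Lemma key_pt eps Z U V x y h : 0 < eps -> 0 <= h -> h * (Rabs (U x y) + Rabs (V x y)) <= eps ->
  Rabs (Z x y + h * R2 eps Z U V x y) <=
  (1 - h / eps * (Rabs (U x y) + Rabs (V x y))) * Rabs (Z x y) +
  h / eps * (Rabs (Z (x - eps) y) * Defs.pos (U (x - eps) y) + Rabs (Z (x + eps) y) * Defs.neg (U (x + eps) y)
           + Rabs (Z x (y - eps)) * Defs.pos (V x (y - eps)) + Rabs (Z x (y + eps)) * Defs.neg (V x (y + eps))).
Proof.
  intros He Hh Hb.
  set (c0 := 1 - h / eps * (Rabs (U x y) + Rabs (V x y))).
  set (c := h / eps).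
  assert (Hc : 0 <= c) by (unfold c; apply Rmult_le_pos; [lra| left; apply Rinv_0_lt_compat; lra]).
  assert (Hc0 : 0 <= c0).
  { unfold c0. assert (h / eps * (Rabs (U x y) + Rabs (V x y)) <= 1); [|lra].
    unfold Rdiv. rewrite Rmult_comm, <- Rmult_assoc. apply Rmult_le_reg_r with eps; [lra|].
    rewrite Rmult_assoc, Rinv_l by lra. lra. }
  unfold R2.
  replace (Z x y + h * (/ eps * (Z (x - eps) y * Defs.pos (U (x - eps) y) - Z x y * Rabs (U x y) +
      Z (x + eps) y * Defs.neg (U (x + eps) y) + Z x (y - eps) * Defs.pos (V x (y - eps)) -
      Z x y * Rabs (V x y) + Z x (y + eps) * Defs.neg (V x (y + eps)))))
    with (c0 * Z x y + (c * (Z (x - eps) y * Defs.pos (U (x - eps) y)) + c * (Z (x + eps) y * Defs.neg (U (x + eps) y))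
       + c * (Z x (y - eps) * Defs.pos (V x (y - eps))) + c * (Z x (y + eps) * Defs.neg (V x (y + eps)))))
    by (unfold c0, c; field; lra).
  fold c0 c.
  pose proof (pos_ge0 (U (x - eps) y)). pose proof (neg_ge0 (U (x + eps) y)).
  pose proof (pos_ge0 (V x (y - eps))). pose proof (neg_ge0 (V x (y + eps))).
  eapply Rle_trans; [apply Rabs_triang|]. apply Rplus_le_compat.
  { rewrite Rabs_mult, (Rabs_right c0) by lra. lra. }
  rewrite !Rmult_plus_distr_l.
  repeat (eapply Rle_trans; [apply Rabs_triang|]; apply Rplus_le_compat);
  rewrite !Rabs_mult, (Rabs_right c) by lra;
  try rewrite (Rabs_right (Defs.pos _)) by lra; try rewrite (Rabs_right (Defs.neg _)) by lra; lra.
Qed.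

Definition C2 (f : R -> R -> R) := forall x y, continuity_2d_pt f x y.

Lemma C2_Cb f : Cb f -> C2 f.
Proof. intros [_ H] x y. apply continuity_2d_pt_filterlim. apply H. Qed.

Lemma C2_plus f g : C2 f -> C2 g -> C2 (fun x y => f x y + g x y).
Proof. intros; intros x y; apply continuity_2d_pt_plus; auto. Qed.
Lemma C2_minus f g : C2 f -> C2 g -> C2 (fun x y => f x y - g x y).
Proof. intros; intros x y; apply continuity_2d_pt_minus; auto. Qed.
Lemma C2_mult f g : C2 f -> C2 g -> C2 (fun x y => f x y * g x y).
Proof. intros; intros x y; apply continuity_2d_pt_mult; auto. Qed.
Lemma C2_const c : C2 (fun _ _ => c).
Proof. intros x y; apply continuity_2d_pt_const. Qed.
Lemma C2_abs f : C2 f -> C2 (fun x y => Rabs (f x y)).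
Proof. intros H x y. apply continuity_1d_2d_pt_comp; auto. apply Rcontinuity_abs. Qed.
Lemma C2_scal c f : C2 f -> C2 (fun x y => c * f x y).
Proof. intros; apply C2_mult; [apply C2_const|auto]. Qed.
Lemma C2_ext f g : (forall x y, f x y = g x y) -> C2 f -> C2 g.
Proof. intros E H x y. eapply continuity_2d_pt_ext; [exact E| apply H]. Qed.
Lemma C2_pos f : C2 f -> C2 (fun x y => Defs.pos (f x y)).
Proof. intros H. apply (C2_ext (fun x y => /2 * (f x y + Rabs (f x y)))).
  { intros; rewrite pos_alt; unfold Rdiv; ring. }
  apply C2_scal. apply C2_plus; auto. apply C2_abs; auto.
Qed.
Lemma C2_neg f : C2 f -> C2 (fun x y => Defs.neg (f x y)).
Proof. intros H. apply (C2_ext (fun x y => /2 * (Rabs (f x y) - f x y))).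
  { intros; rewrite neg_alt; unfold Rdiv; ring. }
  apply C2_scal. apply C2_minus; auto. apply C2_abs; auto.
Qed.
Lemma C2_shift f a b : C2 f -> C2 (fun x y => f (x + a) (y + b)).
Proof.
  intros H x y eps. destruct (H (x + a) (y + b) eps) as [d Hd].
  exists d. intros u v Hu Hv. apply Hd.
  - replace (u + a - (x + a)) with (u - x) by ring; exact Hu.
  - replace (v + b - (y + b)) with (v - y) by ring; exact Hv.
Qed.


Lemma C2_cont_y f x z : C2 f -> continuity_pt (f x) z.
Proof.
  intros H. apply continuity_pt_locally. intros eps.
  destruct (H x z eps) as [d Hd]. exists d. intros y Hy. apply Hd.
  - rewrite Rminus_diag, Rabs_R0. apply cond_pos.
  - exact Hy.
Qed.

Lemma ex_RInt_cpt g a b : (forall z, continuity_pt g z) -> ex_RInt g a b.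
Proof. intros H. apply (ex_RInt_continuous (V := R_CompleteNormedModule)). intros z _. apply continuity_pt_filterlim, H. Qed.

Lemma RInt_le_const g a b c : a <= b -> ex_RInt g a b -> (forall z, a <= z <= b -> g z <= c) ->
  RInt g a b <= (b - a) * c.
Proof.
  intros Hab Hg Hc. eapply Rle_trans.
  - apply RInt_le with (g := fun _ => c); auto. apply ex_RInt_const. intros; apply Hc; lra.
  - rewrite RInt_const. apply Rle_refl.
Qed.

Definition Gint (f : R -> R -> R) (x : R) := RInt (f x) (- PI) PI.

Lemma Gint_cont f x : C2 f -> continuity_pt (Gint f) x.
Proof.
  intros H. apply continuity_pt_locally. intros eps.
  pose proof PI_RGT_0 as Hpi.
  assert (He : 0 < eps / (2 * (2 * PI))) by (apply Rdiv_lt_0_compat; [apply cond_pos| lra]).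
  destruct (uniform_continuity_2d f (x - 1) (x + 1) (- PI) PI
     (fun a b _ _ => H a b) (mkposreal _ He)) as [d Hd].
  set (d' := Rmin d 1).
  assert (Hd' : 0 < d') by (unfold d'; apply Rmin_glb_lt; [apply cond_pos|lra]).
  exists (mkposreal _ Hd'). intros u Hu. change (Rabs (u - x) < d') in Hu.
  assert (Hu1 : Rabs (u - x) < d) by (eapply Rlt_le_trans; [exact Hu| apply Rmin_l]).
  assert (Hu2 : Rabs (u - x) < 1) by (eapply Rlt_le_trans; [exact Hu| apply Rmin_r]).
  apply Rabs_def2 in Hu2.
  unfold Gint.
  assert (Ex : forall w, ex_RInt (f w) (-PI) PI) by (intros; apply ex_RInt_cpt; intros; apply C2_cont_y; auto).
  assert (EQ : RInt (f u) (-PI) PI - RInt (f x) (-PI) PI = RInt (fun z => f u z - f x z) (-PI) PI).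
  { symmetry. exact (RInt_minus (V := R_CompleteNormedModule) (f u) (f x) (-PI) PI (Ex u) (Ex x)). }
  rewrite EQ.
  eapply Rle_lt_trans. { apply abs_RInt_le; [lra| exact (ex_RInt_minus (V := R_CompleteNormedModule) (f u) (f x) (-PI) PI (Ex u) (Ex x))]. }
  eapply Rle_lt_trans. 
  { apply RInt_le_const with (c := eps / (2 * (2 * PI))); [lra| |].
    - apply ex_RInt_cpt. intros z. apply continuity_pt_comp with (f1 := fun z => f u z - f x z) (f2 := Rabs).
      + apply continuity_pt_minus; apply C2_cont_y; auto.
      + apply Rcontinuity_abs.
    - intros z Hz. left. apply Hd; try lra; try exact Hu1; rewrite Rminus_diag, Rabs_R0; apply cond_pos. }
  replace ((PI - - PI) * (eps / (2 * (2 * PI)))) with (eps / 2) by (field; lra).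
  pose proof (cond_pos eps). lra.
Qed.

Lemma dint_ex f : C2 f -> (forall x, ex_RInt (f x) (-PI) PI) /\ ex_RInt (Gint f) (-PI) PI.
Proof.
  intros H. split.
  - intros; apply ex_RInt_cpt; intros; apply C2_cont_y; auto.
  - apply ex_RInt_cpt. intros; apply Gint_cont; auto.
Qed.

Lemma dint_G f : dint f = RInt (Gint f) (-PI) PI.
Proof. reflexivity. Qed.

Lemma dint_le f g : C2 f -> C2 g -> (forall x y, f x y <= g x y) -> dint f <= dint g.
Proof.
  intros Hf Hg Hle. pose proof PI_RGT_0.
  destruct (dint_ex f Hf) as [Hf1 Hf2]. destruct (dint_ex g Hg) as [Hg1 Hg2].
  rewrite !dint_G. apply RInt_le; auto; try lra. intros x _. unfold Gint. apply RInt_le; auto; lra.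
Qed.

Lemma dint_ext f g : (forall x y, f x y = g x y) -> dint f = dint g.
Proof. intros E. unfold dint. apply RInt_ext. intros. apply RInt_ext. intros. auto. Qed.

Lemma dint_plus f g : C2 f -> C2 g -> dint (fun x y => f x y + g x y) = dint f + dint g.
Proof.
  intros Hf Hg.
  destruct (dint_ex f Hf) as [Hf1 Hf2]. destruct (dint_ex g Hg) as [Hg1 Hg2].
  rewrite !dint_G. unfold Gint at 1.
  rewrite (RInt_ext _ (fun x => plus (Gint f x) (Gint g x))).
  - apply (RInt_plus (V := R_CompleteNormedModule)); auto.
  - intros x _. unfold Gint. apply (RInt_plus (V := R_CompleteNormedModule)); auto.
Qed.

Lemma dint_scal c f : C2 f -> dint (fun x y => c * f x y) = c * dint f.
Proof.
  intros Hf. destruct (dint_ex f Hf) as [Hf1 Hf2].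
  rewrite !dint_G. unfold Gint at 1.
  rewrite (RInt_ext _ (fun x => scal c (Gint f x))).
  - apply (RInt_scal (V := R_CompleteNormedModule)); auto.
  - intros x _. unfold Gint. apply (RInt_scal (V := R_CompleteNormedModule)); auto.
Qed.

Lemma RInt_const_R a b (c : R) : RInt (fun _ => c) a b = (b - a) * c.
Proof. rewrite RInt_const. reflexivity. Qed.

Lemma dint_const c : dint (fun _ _ => c) = (2 * PI) * ((2 * PI) * c).
Proof.
  unfold dint. rewrite (RInt_ext _ (fun _ => (2*PI) * c)).
  - rewrite RInt_const_R; replace (PI - - PI) with (2*PI) by ring; reflexivity.
  - intros. rewrite RInt_const_R; replace (PI - - PI) with (2*PI) by ring; reflexivity.
Qed.

Lemma RInt_shift1 g e : (forall z, continuity_pt g z) -> (forall z, g (z + 2 * PI) = g z) ->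
  RInt (fun x => g (x + e)) (-PI) PI = RInt g (-PI) PI.
Proof.
  intros Hc Hp.
  assert (Ex : forall a b, ex_RInt g a b) by (intros; apply ex_RInt_cpt; auto).
  assert (A : RInt (fun x => g (x + e)) (-PI) PI = RInt g (1 * (-PI) + e) (1 * PI + e)).
  { rewrite <- RInt_comp_lin by auto. apply RInt_ext. intros. change (@eq R (g (x + e)) (1 * g (1 * x + e))). rewrite !Rmult_1_l. reflexivity. }
  assert (B : RInt g PI (PI + e) = RInt g (-PI) (-PI + e)).
  { transitivity (RInt g (1 * (-PI) + 2 * PI) (1 * (-PI + e) + 2 * PI)).
    { f_equal; ring. }
    rewrite <- RInt_comp_lin by auto. apply RInt_ext. intros x Hx. change (@eq R (1 * g (1 * x + 2 * PI)) (g x)). rewrite !Rmult_1_l. apply Hp. }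
  rewrite A. replace (1 * - PI + e) with (-PI + e) by ring. replace (1 * PI + e) with (PI + e) by ring.
  rewrite <- (RInt_Chasles g (-PI + e) PI (PI + e)) by auto.
  rewrite <- (RInt_Chasles g (-PI) (-PI + e) PI) by auto.
  rewrite B. apply plus_comm.
Qed.

Lemma dint_shift_x f e : C2 f -> (forall x y, f (x + 2 * PI) y = f x y) ->
  dint (fun x y => f (x + e) y) = dint f.
Proof.
  intros Hf Hp. rewrite !dint_G. unfold Gint at 1.
  change (RInt (fun x => Gint f (x + e)) (-PI) PI = RInt (Gint f) (- PI) PI).
  apply RInt_shift1.
  - intros; apply Gint_cont; auto.
  - intros z. unfold Gint. apply RInt_ext. intros. apply Hp.
Qed.

Lemma dint_shift_y f e : C2 f -> (forall x y, f x (y + 2 * PI) = f x y) ->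
  dint (fun x y => f x (y + e)) = dint f.
Proof.
  intros Hf Hp. unfold dint. apply RInt_ext. intros x _.
  apply (RInt_shift1 (f x)).
  - intros; apply C2_cont_y; auto.
  - intros; apply Hp.
Qed.

Definition sup2 (w : R -> R -> R) : R := real (Lub_Rbar (fun r => exists x y, r = Rabs (w x y))).

Lemma sup2_prop w B : (forall x y, Rabs (w x y) <= B) ->
  (forall x y, Rabs (w x y) <= sup2 w) /\ (forall c, (forall x y, Rabs (w x y) <= c) -> sup2 w <= c).
Proof.
  intros HB. unfold sup2.
  destruct (Lub_Rbar_correct (fun r => exists x y, r = Rabs (w x y))) as [Hub Hl].
  assert (Hle : forall c, (forall x y, Rabs (w x y) <= c) ->
     Rbar_le (Lub_Rbar (fun r => exists x y, r = Rabs (w x y))) c).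
  { intros c Hc. apply Hl. intros r [x [y ->]]. simpl. apply Hc. }
  assert (Hge : forall x y, Rbar_le (Rabs (w x y)) (Lub_Rbar (fun r => exists x y, r = Rabs (w x y)))).
  { intros x y. apply Hub. exists x, y. reflexivity. }
  specialize (Hle B HB). specialize (Hge 0 0).
  destruct (Lub_Rbar (fun r => exists x y, r = Rabs (w x y))) as [l| |] eqn:E; simpl in *; try contradiction.
  split.
  - intros x y. exact (Hub (Rabs (w x y)) (ex_intro _ x (ex_intro _ y eq_refl))).
  - intros c Hc. apply (Hl c). intros r [x [y ->]]. simpl. apply Hc.
Qed.

Lemma R2_shift eps Z U V a b x y : 0 < eps ->
  (forall x y, U (x + a) (y + b) = U x y) -> (forall x y, V (x + a) (y + b) = V x y) ->
  R2 eps (fun x y => Z (x + a) (y + b) - Z x y) U V x y =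
  R2 eps Z U V (x + a) (y + b) - R2 eps Z U V x y.
Proof.
  intros He HU HV. unfold R2.
  replace (U (x + a - eps) (y + b)) with (U (x - eps) y) by (rewrite <- HU; f_equal; ring).
  replace (U (x + a + eps) (y + b)) with (U (x + eps) y) by (rewrite <- HU; f_equal; ring).
  rewrite HU.
  replace (V (x + a) (y + b - eps)) with (V x (y - eps)) by (rewrite <- HV; f_equal; ring).
  replace (V (x + a) (y + b + eps)) with (V x (y + eps)) by (rewrite <- HV; f_equal; ring).
  rewrite HV.
  replace (x - eps + a) with (x + a - eps) by ring.
  replace (x + eps + a) with (x + a + eps) by ring.
  replace (y - eps + b) with (y + b - eps) by ring.
  replace (y + eps + b) with (y + b + eps) by ring.
  ring.
Qed.

Lemma periodic_sol (Z U V : R -> R -> R -> R) eps M a b :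
  0 < eps -> 0 <= M ->
  (forall t, 0 <= t -> exists B, forall x y, Rabs (Z t x y) <= B) ->
  (forall t, 0 <= t -> forall e, 0 < e -> exists d, 0 < d /\
    forall s, 0 <= s -> Rabs (s - t) < d -> forall x y, Rabs (Z s x y - Z t x y) <= e) ->
  (forall t, 0 <= t -> forall de, 0 < de -> exists d, 0 < d /\ forall s, t < s < t + d ->
     forall x y, Rabs (Z s x y - Z t x y - (s - t) * R2 eps (Z t) (U t) (V t) x y) <= (s - t) * de) ->
  (forall t, 0 <= t -> forall x y, U t (x + a) (y + b) = U t x y /\ V t (x + a) (y + b) = V t x y) ->
  (forall t, 0 <= t -> forall x y, Rabs (U t x y) <= M /\ Rabs (V t x y) <= M) ->
  (forall x y, Z 0 (x + a) (y + b) = Z 0 x y) ->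
  forall t, 0 <= t -> forall x y, Z t (x + a) (y + b) = Z t x y.
Proof.
  intros He HM HB Hc HD HP HUb H0.
  set (W := fun t x y => Z t (x + a) (y + b) - Z t x y).
  assert (HWB : forall t, 0 <= t -> exists B, forall x y, Rabs (W t x y) <= B).
  { intros t Ht. destruct (HB t Ht) as [B HB']. exists (2 * B). intros x y. unfold W.
    eapply Rle_trans; [apply Rabs_triang|]. rewrite Rabs_Ropp.
    pose proof (HB' (x+a) (y+b)). pose proof (HB' x y). lra. }
  set (m := fun t => sup2 (W t)).
  assert (Hm : forall t, 0 <= t -> (forall x y, Rabs (W t x y) <= m t) /\
     (forall c, (forall x y, Rabs (W t x y) <= c) -> m t <= c)).
  { intros t Ht. destruct (HWB t Ht) as [B HB']. exact (sup2_prop (W t) B HB'). }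
  assert (Hm0 : forall t, 0 <= t -> 0 <= m t).
  { intros t Ht. destruct (Hm t Ht) as [H1 _]. eapply Rle_trans; [apply Rabs_pos| apply (H1 0 0)]. }
  assert (Hpm : forall t, 0 <= t -> m t = 0).
  { apply (gronwall m (4 * M / eps)).
    - intros t Ht e Hee. destruct (Hc t Ht (e / 3) ltac:(lra)) as [d [Hd Hd1]].
      exists d; split; [exact Hd|]. intros s Hs Hst.
      destruct (Hm s Hs) as [Hs1 Hs2]. destruct (Hm t Ht) as [Ht1 Ht2].
      assert (A : forall x y, Rabs (W s x y - W t x y) <= 2 * (e / 3)).
      { intros x y. unfold W.
        replace (Z s (x + a) (y + b) - Z s x y - (Z t (x + a) (y + b) - Z t x y))
          with ((Z s (x + a) (y + b) - Z t (x + a) (y + b)) - (Z s x y - Z t x y)) by ring.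
        eapply Rle_trans; [apply Rabs_triang|]. rewrite Rabs_Ropp.
        pose proof (Hd1 s Hs Hst (x+a) (y+b)). pose proof (Hd1 s Hs Hst x y). lra. }
      assert (m s <= m t + 2 * (e / 3)).
      { apply Hs2. intros x y. specialize (A x y). specialize (Ht1 x y).
        pose proof (Rabs_triang_inv (W s x y) (W t x y)). lra. }
      assert (m t <= m s + 2 * (e / 3)).
      { apply Ht2. intros x y. specialize (A x y). specialize (Hs1 x y).
        rewrite Rabs_minus_sym in A.
        pose proof (Rabs_triang_inv (W t x y) (W s x y)). lra. }
      apply Rabs_def1; lra.
    - exact Hm0.
    - destruct (Hm 0 ltac:(lra)) as [_ H2]. apply Rle_antisym; [|apply Hm0; lra].
      apply H2. intros x y. unfold W. rewrite H0, Rminus_diag, Rabs_R0. lra.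
    - apply Rmult_le_pos; [lra| left; apply Rinv_0_lt_compat; lra].
    - intros t Ht e Hee.
      destruct (HD t Ht (e / 2) ltac:(lra)) as [d [Hd Hd1]].
      set (d' := Rmin d (eps / (2 * M + 1))).
      assert (Hd' : 0 < d') by (unfold d'; apply Rmin_glb_lt; [lra| apply Rdiv_lt_0_compat; lra]).
      exists d'; split; [exact Hd'|]. intros s Hs.
      assert (Hs' : t < s < t + d) by (split; [lra| eapply Rlt_le_trans; [apply Hs| apply Rplus_le_compat_l, Rmin_l]]).
      assert (Hh : (s - t) <= eps / (2 * M + 1)) by (assert (d' <= eps / (2*M+1)) by apply Rmin_r; lra).
      destruct (Hm s ltac:(lra)) as [_ Hs2]. destruct (Hm t Ht) as [Ht1 _].
      apply Hs2. intros x y.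
      set (h := s - t) in *.
      assert (Hh0 : 0 < h) by (unfold h; lra).
      destruct (HUb t Ht x y) as [HUx HVx].
      assert (Hcond : h * (Rabs (U t x y) + Rabs (V t x y)) <= eps).
      { apply Rle_trans with (h * (2 * M + 1)); [apply Rmult_le_compat_l; lra|].
        apply Rmult_le_compat_r with (r := 2 * M + 1) in Hh; [|lra].
        replace (eps / (2 * M + 1) * (2 * M + 1)) with eps in Hh by (field; lra). lra. }
      pose proof (key_pt eps (W t) (U t) (V t) x y h He ltac:(lra) Hcond) as K.
      assert (E : W s x y = (W t x y + h * R2 eps (W t) (U t) (V t) x y) +
         ((Z s (x + a) (y + b) - Z t (x + a) (y + b) - h * R2 eps (Z t) (U t) (V t) (x + a) (y + b)) -
          (Z s x y - Z t x y - h * R2 eps (Z t) (U t) (V t) x y))).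
      { unfold W; cbv beta.
        rewrite (R2_shift eps (Z t) (U t) (V t) a b x y He).
        - ring.
        - intros; apply (HP t Ht).
        - intros; apply (HP t Ht). }
      rewrite E. eapply Rle_trans; [apply Rabs_triang|].
      eapply Rle_trans; [apply Rplus_le_compat; [exact K| apply Rabs_triang]|].
      rewrite Rabs_Ropp.
      pose proof (Hd1 s Hs' (x + a) (y + b)) as D1. pose proof (Hd1 s Hs' x y) as D2. fold h in D1, D2.
      pose proof (Ht1 x y) as W0. pose proof (Ht1 (x - eps) y) as W1. pose proof (Ht1 (x + eps) y) as W2.
      pose proof (Ht1 x (y - eps)) as W3. pose proof (Ht1 x (y + eps)) as W4.
      pose proof (pos_le (U t (x - eps) y)) as L1. pose proof (pos_ge0 (U t (x - eps) y)) as G1.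
      pose proof (neg_le (U t (x + eps) y)) as L2. pose proof (neg_ge0 (U t (x + eps) y)) as G2.
      pose proof (pos_le (V t x (y - eps))) as L3. pose proof (pos_ge0 (V t x (y - eps))) as G3.
      pose proof (neg_le (V t x (y + eps))) as L4. pose proof (neg_ge0 (V t x (y + eps))) as G4.
      destruct (HUb t Ht (x - eps) y) as [B1 _]. destruct (HUb t Ht (x + eps) y) as [B2 _].
      destruct (HUb t Ht x (y - eps)) as [_ B3]. destruct (HUb t Ht x (y + eps)) as [_ B4].
      pose proof (Hm0 t Ht) as Hmt.
      set (c := h / eps).
      assert (Hc0 : 0 <= c) by (unfold c; apply Rmult_le_pos; [lra| left; apply Rinv_0_lt_compat; lra]).
      assert (Hcm : h * (4 * M / eps) = c * (4 * M)) by (unfold c; field; lra).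
      rewrite Hcm. fold c in K.
      set (S := Rabs (U t x y) + Rabs (V t x y)).
      assert (HS : 0 <= S) by (unfold S; pose proof (Rabs_pos (U t x y)); pose proof (Rabs_pos (V t x y)); lra).
      assert (P1 : (1 - c * S) * Rabs (W t x y) <= m t + (- c * S) * Rabs (W t x y)) by lra.
      assert (P2 : - c * S * Rabs (W t x y) <= 0).
      { pose proof (Rabs_pos (W t x y)). assert (0 <= c * S) by nra. nra. }
      assert (P3 : Rabs (W t (x - eps) y) * Defs.pos (U t (x - eps) y) +
          Rabs (W t (x + eps) y) * Defs.neg (U t (x + eps) y) +
          Rabs (W t x (y - eps)) * Defs.pos (V t x (y - eps)) +
          Rabs (W t x (y + eps)) * Defs.neg (V t x (y + eps)) <= m t * (4 * M)).
      { assert (Hw : forall w p, 0 <= p -> p <= M -> Rabs w <= m t -> Rabs w * p <= m t * M).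
        { intros w p Hp HpM Hw. pose proof (Rabs_pos w). nra. }
        pose proof (Hw _ _ G1 ltac:(lra) W1). pose proof (Hw _ _ G2 ltac:(lra) W2).
        pose proof (Hw _ _ G3 ltac:(lra) W3). pose proof (Hw _ _ G4 ltac:(lra) W4). lra. }
      assert (P4 : c * (Rabs (W t (x - eps) y) * Defs.pos (U t (x - eps) y) +
          Rabs (W t (x + eps) y) * Defs.neg (U t (x + eps) y) +
          Rabs (W t x (y - eps)) * Defs.pos (V t x (y - eps)) +
          Rabs (W t x (y + eps)) * Defs.neg (V t x (y + eps))) <= c * (m t * (4 * M)))
        by (apply Rmult_le_compat_l; lra).
      assert (EQ : m t * (1 + c * (4 * M)) = m t + c * (m t * (4 * M))) by ring.
      rewrite EQ. fold S in K. lra.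
  }
  intros t Ht x y. destruct (Hm t Ht) as [H1 _]. specialize (H1 x y). rewrite Hpm in H1 by exact Ht.
  unfold W in H1. pose proof (Rabs_pos (Z t (x + a) (y + b) - Z t x y)).
  assert (Habs : Rabs (Z t (x + a) (y + b) - Z t x y) = 0) by lra.
  apply Rabs_eq_0 in Habs. lra.
Qed.

Lemma C2_opp f : C2 f -> C2 (fun x y => - f x y).
Proof. intros H x y. apply continuity_2d_pt_opp, H. Qed.

Lemma C2_shx f a : C2 f -> C2 (fun x y => f (x + a) y).
Proof. intros H. apply (C2_ext (fun x y => f (x + a) (y + 0))). { intros; rewrite Rplus_0_r; auto. }
  apply C2_shift; auto. Qed.
Lemma C2_shy f b : C2 f -> C2 (fun x y => f x (y + b)).
Proof. intros H. apply (C2_ext (fun x y => f (x + 0) (y + b))). { intros; rewrite Rplus_0_r; auto. }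
  apply C2_shift; auto. Qed.

Lemma dint_close f g c : C2 f -> C2 g -> (forall x y, f x y <= g x y + c) ->
  dint f <= dint g + 2 * PI * (2 * PI * c).
Proof.
  intros Hf Hg H. eapply Rle_trans. apply (dint_le f (fun x y => g x y + c)); auto.
  - apply C2_plus; auto. apply C2_const.
  - rewrite dint_plus; auto; [|apply C2_const]. rewrite dint_const. lra.
Qed.

Lemma L1_step eps (Z U V : R -> R -> R) h :
  0 < eps -> C2 Z -> C2 U -> C2 V ->
  (forall x y, Z (x + 2 * PI) y = Z x y /\ Z x (y + 2 * PI) = Z x y) ->
  (forall x y, U (x + 2 * PI) y = U x y /\ U x (y + 2 * PI) = U x y) ->
  (forall x y, V (x + 2 * PI) y = V x y /\ V x (y + 2 * PI) = V x y) ->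
  dint (fun x y => (1 - h / eps * (Rabs (U x y) + Rabs (V x y))) * Rabs (Z x y) +
  h / eps * (Rabs (Z (x - eps) y) * Defs.pos (U (x - eps) y) + Rabs (Z (x + eps) y) * Defs.neg (U (x + eps) y)
           + Rabs (Z x (y - eps)) * Defs.pos (V x (y - eps)) + Rabs (Z x (y + eps)) * Defs.neg (V x (y + eps))))
  = dint (fun x y => Rabs (Z x y)).
Proof.
  intros He HZ HU HV PZ PU PV.
  set (c := h / eps).
  set (F1 := fun x y => Rabs (Z x y) * Defs.pos (U x y)).
  set (F2 := fun x y => Rabs (Z x y) * Defs.neg (U x y)).
  set (F3 := fun x y => Rabs (Z x y) * Defs.pos (V x y)).
  set (F4 := fun x y => Rabs (Z x y) * Defs.neg (V x y)).
  assert (C1 : C2 F1) by (apply C2_mult; [apply C2_abs|apply C2_pos]; auto).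
  assert (C2' : C2 F2) by (apply C2_mult; [apply C2_abs|apply C2_neg]; auto).
  assert (C3 : C2 F3) by (apply C2_mult; [apply C2_abs|apply C2_pos]; auto).
  assert (C4 : C2 F4) by (apply C2_mult; [apply C2_abs|apply C2_neg]; auto).
  assert (CA : C2 (fun x y => Rabs (Z x y))) by (apply C2_abs; auto).
  set (SA := fun x y => F1 (x + - eps) y + F2 (x + eps) y + F3 x (y + - eps) + F4 x (y + eps)).
  set (SB := fun x y => F1 x y + F2 x y + F3 x y + F4 x y).
  assert (CSA : C2 SA).
  { unfold SA. repeat apply C2_plus; try apply C2_shx; try apply C2_shy; auto. }
  assert (CSB : C2 SB) by (unfold SB; repeat apply C2_plus; auto).
  rewrite (dint_ext _ (fun x y => Rabs (Z x y) + (c * SA x y + (- c) * SB x y))).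
  2:{ intros x y. unfold SA, SB, F1, F2, F3, F4, c. unfold Rminus at 2 3 4 5.
      rewrite <- (pos_neg (U x y)), <- (pos_neg (V x y)). ring. }
  rewrite dint_plus; auto. 2:{ apply C2_plus; apply C2_scal; auto. }
  rewrite dint_plus; try apply C2_scal; auto.
  rewrite !dint_scal; auto.
  assert (E : dint SA = dint SB).
  { unfold SA, SB.
    rewrite !dint_plus; repeat apply C2_plus; try apply C2_shx; try apply C2_shy; auto.
    rewrite (dint_shift_x F1), (dint_shift_x F2), (dint_shift_y F3), (dint_shift_y F4); auto;
    intros x y; unfold F1, F2, F3, F4; rewrite ?(proj1 (PZ x y)), ?(proj2 (PZ x y)),
      ?(proj1 (PU x y)), ?(proj2 (PU x y)), ?(proj1 (PV x y)), ?(proj2 (PV x y)); reflexivity. }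
  rewrite E. ring.
Qed.

Theorem lemma4
  (u v X : R -> R -> R -> R -> R)   (* eps x y t *)
  (rho0 : R -> R -> R -> R)         (* eps x y *)
  (Hu_per : forall eps, 0 < eps < 1 -> forall t, 0 <= t ->
     periodic2 (fun x y => u eps x y t) /\ periodic2 (fun x y => v eps x y t))
  (Hu_Cb : forall eps, 0 < eps < 1 ->
     Cb_path (fun t x y => u eps x y t) /\ Cb_path (fun t x y => v eps x y t))
  (Hu_cont : forall eps, 0 < eps < 1 ->
     sup_continuous (fun t x y => u eps x y t) /\
     sup_continuous (fun t x y => v eps x y t))
  (Hu_bd : exists M, forall eps, 0 < eps < 1 -> forall x y t, 0 <= t ->
     Rabs (u eps x y t) <= M /\ Rabs (v eps x y t) <= M)
  (Hrho_Cb : forall eps, 0 < eps < 1 -> Cb (rho0 eps))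
  (Hrho_per : forall eps, 0 < eps < 1 -> periodic2 (rho0 eps))
  (Hrho_L1 : exists B, forall eps, 0 < eps < 1 ->
     dint (fun x y => Rabs (rho0 eps x y)) <= B)
  (HX : forall eps, 0 < eps < 1 ->
     Cb_path (fun t x y => X eps x y t) /\
     (forall x y, X eps x y 0 = rho0 eps x y) /\
     exists X' : R -> R -> R -> R,
       Cb_path X' /\ sup_continuous X' /\
       sup_derivative (fun t x y => X eps x y t) X' /\
       (forall t, 0 <= t -> forall x y,
          X' t x y = rhs eps (X eps) (u eps) (v eps) x y t)) :
  exists C, forall eps, 0 < eps < 1 -> forall t, 0 <= t ->
    dint (fun x y => Rabs (X eps x y t)) <= dint (fun x y => Rabs (rho0 eps x y)) /\
    dint (fun x y => Rabs (rho0 eps x y)) <= C.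
Proof.
  destruct Hrho_L1 as [B HB]. exists B.
  intros eps Heps t Ht. split; [| apply HB; auto].
  destruct Hu_bd as [M HM].
  assert (HM0 : 0 <= M).
  { destruct (HM eps Heps 0 0 0 (Rle_refl 0)) as [H _]. eapply Rle_trans; [apply Rabs_pos| exact H]. }
  assert (He : 0 < eps) by lra.
  destruct (HX eps Heps) as [HXcb [Hinit [X' [HX'cb [HX'c [HX'd HX'e]]]]]].
  destruct (Hu_Cb eps Heps) as [HUcb HVcb].
  set (Z := fun t x y => X eps x y t).
  set (U := fun t x y => u eps x y t).
  set (V := fun t x y => v eps x y t).
  assert (Ediv : forall A B0 C h, h <> 0 -> A - B0 - h * C = h * ((A - B0) / h - C))
    by (intros; field; auto).
  assert (HD : forall t, 0 <= t -> forall de, 0 < de -> exists d, 0 < d /\ forall s, t < s < t + d ->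
     forall x y, Rabs (Z s x y - Z t x y - (s - t) * R2 eps (Z t) (U t) (V t) x y) <= (s - t) * de).
  { intros t0 Ht0 de Hde. destruct (HX'd t0 Ht0 de Hde) as [d [Hd Hd1]]. exists d; split; auto.
    intros s Hs x y.
    assert (Hab : Rabs (s - t0) < d) by (rewrite Rabs_right; lra).
    specialize (Hd1 s ltac:(lra) ltac:(lra) Hab x y).
    rewrite HX'e in Hd1 by auto. rewrite rhs_R2 in Hd1.
    rewrite Ediv by lra. rewrite Rabs_mult, (Rabs_right (s - t0)) by lra.
    apply Rmult_le_compat_l; [lra|]. exact Hd1. }
  assert (HZc : forall t, 0 <= t -> forall e, 0 < e -> exists d, 0 < d /\
    forall s, 0 <= s -> Rabs (s - t) < d -> forall x y, Rabs (Z s x y - Z t x y) <= e).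
  { intros t0 Ht0 e Hee. destruct (proj1 (HX'cb t0 Ht0)) as [B' HB'].
    assert (HB'0 : 0 <= B') by (eapply Rle_trans; [apply Rabs_pos| apply (HB' 0 0)]).
    destruct (HX'd t0 Ht0 1 Rlt_0_1) as [d [Hd Hd1]].
    exists (Rmin d (e / (B' + 1))). split.
    { apply Rmin_glb_lt; [lra| apply Rdiv_lt_0_compat; lra]. }
    intros s Hs Hst x y.
    destruct (Req_dec s t0) as [->|Hne]. { rewrite Rminus_diag, Rabs_R0; lra. }
    assert (A1 : Rabs (s - t0) < d) by (eapply Rlt_le_trans; [exact Hst| apply Rmin_l]).
    assert (A2 : Rabs (s - t0) < e / (B' + 1)) by (eapply Rlt_le_trans; [exact Hst| apply Rmin_r]).
    specialize (Hd1 s Hs Hne A1 x y). specialize (HB' x y).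
    assert (Hq : Rabs ((Z s x y - Z t0 x y) / (s - t0)) <= B' + 1).
    { pose proof (Rabs_triang_inv ((Z s x y - Z t0 x y) / (s - t0)) (X' t0 x y)). unfold Z in *. lra. }
    replace (Z s x y - Z t0 x y) with ((s - t0) * ((Z s x y - Z t0 x y) / (s - t0))) by (field; lra).
    rewrite Rabs_mult.
    apply Rle_trans with (Rabs (s - t0) * (B' + 1)).
    { apply Rmult_le_compat_l; [apply Rabs_pos| exact Hq]. }
    apply Rmult_lt_compat_r with (r := B' + 1) in A2; [|lra].
    replace (e / (B' + 1) * (B' + 1)) with e in A2 by (field; lra). lra. }
  assert (HB0 : forall t, 0 <= t -> exists B, forall x y, Rabs (Z t x y) <= B)
    by (intros t0 Ht0; exact (proj1 (HXcb t0 Ht0))).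
  assert (HUb : forall t, 0 <= t -> forall x y, Rabs (U t x y) <= M /\ Rabs (V t x y) <= M)
    by (intros; apply HM; auto).
  assert (HPx : forall t, 0 <= t -> forall x y, Z t (x + 2 * PI) y = Z t x y).
  { intros t0 Ht0 x y.
    pose proof (periodic_sol Z U V eps M (2 * PI) 0 He HM0 HB0 HZc HD) as P.
    rewrite <- (Rplus_0_r y) at 1. apply P; auto.
    - intros t1 Ht1 x1 y1. rewrite Rplus_0_r.
      destruct (Hu_per eps Heps t1 Ht1) as [P1 P2]. split; [apply (P1 x1 y1)| apply (P2 x1 y1)].
    - intros x1 y1. rewrite Rplus_0_r. unfold Z. rewrite !Hinit. apply (Hrho_per eps Heps x1 y1). }
  assert (HPy : forall t, 0 <= t -> forall x y, Z t x (y + 2 * PI) = Z t x y).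
  { intros t0 Ht0 x y.
    pose proof (periodic_sol Z U V eps M 0 (2 * PI) He HM0 HB0 HZc HD) as P.
    rewrite <- (Rplus_0_r x) at 1. apply P; auto.
    - intros t1 Ht1 x1 y1. rewrite Rplus_0_r.
      destruct (Hu_per eps Heps t1 Ht1) as [P1 P2]. split; [apply (P1 x1 y1)| apply (P2 x1 y1)].
    - intros x1 y1. rewrite Rplus_0_r. unfold Z. rewrite !Hinit. apply (Hrho_per eps Heps x1 y1). }
  assert (HZ2 : forall t, 0 <= t -> C2 (Z t)) by (intros; apply C2_Cb, HXcb; auto).
  assert (HU2 : forall t, 0 <= t -> C2 (U t)) by (intros; apply C2_Cb, HUcb; auto).
  assert (HV2 : forall t, 0 <= t -> C2 (V t)) by (intros; apply C2_Cb, HVcb; auto).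
  set (N := fun t => dint (fun x y => Rabs (Z t x y))).
  assert (Hk : 0 < 2 * PI * (2 * PI)) by (pose proof PI_RGT_0; nra).
  assert (HNc : rcont N).
  { intros t0 Ht0 e Hee.
    set (e' := e / (2 * (2 * PI * (2 * PI)))).
    assert (He' : 0 < e') by (unfold e'; apply Rdiv_lt_0_compat; lra).
    assert (Hke : 2 * PI * (2 * PI * e') = e / 2) by (unfold e'; field; pose proof PI_RGT_0; lra).
    destruct (HZc t0 Ht0 e' He') as [d [Hd Hd1]]. exists d; split; auto.
    intros s Hs Hst. unfold N.
    assert (A : dint (fun x y => Rabs (Z s x y)) <= dint (fun x y => Rabs (Z t0 x y)) + e / 2).
    { rewrite <- Hke. apply dint_close; try apply C2_abs; auto.
      intros x y. specialize (Hd1 s Hs Hst x y). pose proof (Rabs_triang_inv (Z s x y) (Z t0 x y)). lra. }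
    assert (A' : dint (fun x y => Rabs (Z t0 x y)) <= dint (fun x y => Rabs (Z s x y)) + e / 2).
    { rewrite <- Hke. apply dint_close; try apply C2_abs; auto.
      intros x y. specialize (Hd1 s Hs Hst x y). rewrite Rabs_minus_sym in Hd1.
      pose proof (Rabs_triang_inv (Z t0 x y) (Z s x y)). lra. }
    apply Rabs_def1; lra. }
  assert (HNd : rdini N).
  { intros t0 Ht0 e Hee.
    set (de := e / (2 * PI * (2 * PI))).
    assert (Hde : 0 < de) by (unfold de; apply Rdiv_lt_0_compat; lra).
    destruct (HD t0 Ht0 de Hde) as [d [Hd Hd1]].
    set (d' := Rmin d (eps / (2 * M + 1))).
    assert (Hd' : 0 < d') by (unfold d'; apply Rmin_glb_lt; [lra| apply Rdiv_lt_0_compat; lra]).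
    exists d'; split; [exact Hd'|]. intros s Hs.
    assert (Hs' : t0 < s < t0 + d) by (split; [lra| eapply Rlt_le_trans; [apply Hs| apply Rplus_le_compat_l, Rmin_l]]).
    assert (Hh : (s - t0) <= eps / (2 * M + 1)) by (assert (d' <= eps / (2*M+1)) by apply Rmin_r; lra).
    set (h := s - t0) in *.
    assert (Hh0 : 0 < h) by (unfold h; lra).
    assert (Hcond : forall x y, h * (Rabs (U t0 x y) + Rabs (V t0 x y)) <= eps).
    { intros x y. destruct (HUb t0 Ht0 x y) as [HUx HVx].
      apply Rle_trans with (h * (2 * M + 1)); [apply Rmult_le_compat_l; lra|].
      apply Rmult_le_compat_r with (r := 2 * M + 1) in Hh; [|lra].
      replace (eps / (2 * M + 1) * (2 * M + 1)) with eps in Hh by (field; lra). lra. }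
    unfold N.
    rewrite <- (L1_step eps (Z t0) (U t0) (V t0) h He (HZ2 t0 Ht0) (HU2 t0 Ht0) (HV2 t0 Ht0)).
    2:{ intros; split; auto. }
    2:{ intros x y. destruct (Hu_per eps Heps t0 Ht0) as [P1 _]. split; [apply (P1 x y)| apply (P1 x y)]. }
    2:{ intros x y. destruct (Hu_per eps Heps t0 Ht0) as [_ P2]. split; [apply (P2 x y)| apply (P2 x y)]. }
    replace (h * e) with (2 * PI * (2 * PI * (h * de))) by (unfold de; field; pose proof PI_RGT_0; lra).
    apply dint_close.
    - apply C2_abs; apply HZ2; lra.
    - repeat first [apply C2_minus | apply C2_plus | apply C2_opp | apply C2_mult | apply C2_const | apply C2_abs | apply C2_pos | apply C2_neg | apply C2_shx | apply C2_shy | apply C2_scal | apply HZ2 | apply HU2 | apply HV2]; auto.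
    - intros x y.
      pose proof (key_pt eps (Z t0) (U t0) (V t0) x y h He ltac:(lra) (Hcond x y)) as K.
      specialize (Hd1 s Hs' x y). fold h in Hd1.
      replace (Z s x y) with ((Z t0 x y + h * R2 eps (Z t0) (U t0) (V t0) x y) +
        (Z s x y - Z t0 x y - h * R2 eps (Z t0) (U t0) (V t0) x y)) by ring.
      eapply Rle_trans; [apply Rabs_triang|]. lra. }
  pose proof (dini_mono N 0 t HNc HNd (Rle_refl 0) Ht) as Hmono.
  unfold N in Hmono. change (dint (fun x y => Rabs (Z t x y)) <= dint (fun x y => Rabs (rho0 eps x y))).
  rewrite <- (dint_ext (fun x y => Rabs (Z 0 x y)) (fun x y => Rabs (rho0 eps x y))); [exact Hmono|].
  intros x y. unfold Z. rewrite Hinit. reflexivity.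
Qed.
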